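(* Consider a sequence $(x^k,y^k)$ generated by Algorithm IP (described in the context). For every $k\geq0$: (1) $q(x^{k+1})\leq q_{\mu_k}(x^{k+1})\leq q_{\mu_k}(x^k)$, and, for $k\geq1$, $q_{\mu_k}(x^k)\leq q_{\mu_{k-1}}(x^k)$; (2) $x^{k+1}$ is $\varepsilon_k$-stationary for $q_{\mu_k}$, i.e. $\operatorname{dist}(0,\hat\partial q_{\mu_k}(x^{k+1}))\leq\varepsilon_k$, and in particular $x^{k+1}$ is strictly feasible: $x^{k+1}\in\operatorname{dom} q$ and $c(x^{k+1})<0$; (3) $y^{k+1}\geq0$; (4) $\operatorname{dist}\bigl(-\nabla c(x^{k+1})^\top y^{k+1},\,\partial q(x^{k+1})\bigr)\leq\varepsilon_k$.
   Context: Setting: $f:\mathbb{R}^n\to\mathbb{R}$ has locally Lipschitz continuous gradient; $g:\mathbb{R}^n\to\mathbb{R}\cup\{\infty\}$ is proper, lower semicontinuous, prox-bounded ($g+\frac{1}{2\gamma}\|\cdot\|^2$ bounded below for some $\gamma>0$; $\gamma_g\in(0,\infty]$ denotes the supremum of such $\gamma$), and continuous relative to $\operatorname{dom} g$ (whenever $\operatorname{dom} g\ni x^k\to x$, $g(x^k)\to g(x)$); $c:\mathbb{R}^n\to\mathbb{R}^m$ has locally Lipschitz continuous Jacobian $\nabla c$. $q=f+g$, $\inf\{q(x): c(x)\le0\}\in\mathbb{R}$, $D=\{x: c(x)<0\}$, $F=\operatorname{dom} q\cap D\neq\emptyset$. The barrier $b:\mathbb{R}\to[0,\infty]$ has $\operatorname{dom}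 b=(-\infty,0)$, is twice continuously differentiable with $b'>0$ there, and $b(t)\to\infty$ as $t\to0^-$. For $\mu>0$: $f_\mu(z)=f(z)+\mu\sum_{i=1}^m b(c_i(z))$ ($=\infty$ outside $D$), $q_\mu=f_\mu+g$. $\hat\partial$ is the regular and $\partial$ the limiting subdifferential. $T_{\mu,\gamma}(z)=\operatorname{prox}_{\gamma g}(z-\gamma\nabla f_\mu(z))$ with $\operatorname{prox}_{\gamma g}(x)=\operatorname{argmin}_w\{g(w)+\frac{1}{2\gamma}\|w-x\|^2\}$. Inner solver IP-FB$(z^0,\mu,\varepsilon)$ (inputs $z^0\in F$, $\mu,\varepsilon>0$; parameters $\gamma_0\in(0,\gamma_g)$, $\alpha,\beta\in(0,1)$): set $j=0$ and start at step 2. Step 1 ($j\geq1$): $\gamma_j\gets\gamma_{j-1}$, $z^j\gets\bar z^{j-1}$. Step 2: compute $\bar z^j\in T_{\mu,\gamma_j}(z^j)$. Step 3: unless (a) $c(\bar z^j)<0$, (b) $q_\mu(\bar z^j)\leq q_\mu(z^j)-\frac{1-\alpha}{2\gamma_j}\|\bar z^j-z^j\|^2$ and (c) $\|\nabla f_\mu(\bar z^j)-\nabla f_\mu(z^j)\|\leq\frac{\alpha}{\gamma_j}\|\bar z^j-z^j\|$ all hold, set $\gamma_j\gets\beta\gamma_j$ and go back to Step 2. Step 4: if $\|\frac{1}{\gamma_j}(z^j-\bar z^j)-\nabla f_\mu(z^j)+\nabla f_\mu(\bar z^j)\|\leq\varepsilon$, return $\bar z^j$. Step 5: $j\gets j+1$,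 go to Step 1. Algorithm IP: inputs $x^0\in F$, tolerances $\epsilon_{\rm p},\epsilon_{\rm d}>0$; parameters $\varepsilon_0,\mu_0>0$, $\theta_\varepsilon,\theta_\mu\in(0,1)$. For $k=0,1,2,\dots$: (i) $x^{k+1}=$ IP-FB$(x^k,\mu_k,\varepsilon_k)$; (ii) $y_i^{k+1}=\mu_k b'(c_i(x^{k+1}))$ for all $i$; (iii) if $\varepsilon_k\leq\epsilon_{\rm d}$ and $\max_i\min\{-c_i(x^{k+1}),y_i^{k+1}\}\leq\epsilon_{\rm p}$, return $(x^{k+1},y^{k+1})$; (iv) choose $0<\varepsilon_{k+1}\leq\max\{\epsilon_{\rm d},\theta_\varepsilon\varepsilon_k\}$ and $0<\mu_{k+1}\leq\theta_\mu\mu_k$. *)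

(* Defs.v *)
(* Vectors of R^n are column vectors 'cV[R]_n; extended-valued functions
   take values in \bar R (R ∪ {±oo}; -oo is excluded by hypothesis). *)
From HB Require Import structures.
From mathcomp Require Import all_boot all_order all_algebra.
From mathcomp Require Import all_classical all_reals all_analysis.
Set Implicit Arguments. Unset Strict Implicit. Unset Printing Implicit Defensive.
Import Order.TTheory GRing.Theory Num.Theory.
Import numFieldNormedType.Exports.
Local Open Scope ring_scope.
Local Open Scope classical_set_scope.

Section IP.
Variable R : realType.

Definition dotv n (u v : 'cV[R]_n) : R := \sum_(i < n) u i ord0 * v i ord0.
Definition enorm n (u : 'cV[R]_n) : R := Num.sqrt (dotv u u).
Definition fnorm m n (A : 'M[R]_(m, n)) : R :=
  Num.sqrt (\sum_(i < m) \sum_(j < n) A i j ^+ 2).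

Definition vcvg n (u : nat -> 'cV[R]_n) (x : 'cV[R]_n) : Prop :=
  forall e : R, 0 < e -> exists N, forall k, (N <= k)%N -> enorm (u k - x) < e.

Definition rcvg (u : nat -> R) (a : R) : Prop :=
  forall e : R, 0 < e -> exists N, forall k, (N <= k)%N -> `|u k - a| < e.

Definition has_gradient n (f : 'cV[R]_n -> R) (x gf : 'cV[R]_n) : Prop :=
  forall e : R, 0 < e -> exists2 d : R, 0 < d & forall z,
    enorm (z - x) < d -> `|f z - f x - dotv gf (z - x)| <= e * enorm (z - x).

Definition has_jacobian n m (c : 'cV[R]_n -> 'cV[R]_m) (x : 'cV[R]_n)
    (Jc : 'M[R]_(m, n)) : Prop :=
  forall e : R, 0 < e -> exists2 d : R, 0 < d & forall z,
    enorm (z - x) < d -> enorm (c z - c x - Jc *m (z - x)) <= e * enorm (z - x).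

Definition loc_lipschitz_vec n k (F : 'cV[R]_n -> 'cV[R]_k) : Prop :=
  forall x, exists2 r : R, 0 < r & exists L : R, forall u v,
    enorm (u - x) < r -> enorm (v - x) < r -> enorm (F u - F v) <= L * enorm (u - v).

Definition loc_lipschitz_mx n m k (F : 'cV[R]_n -> 'M[R]_(m, k)) : Prop :=
  forall x, exists2 r : R, 0 < r & exists L : R, forall u v,
    enorm (u - x) < r -> enorm (v - x) < r -> fnorm (F u - F v) <= L * enorm (u - v).

Definition has_deriv1 (h : R -> R) (t d : R) : Prop :=
  forall e : R, 0 < e -> exists2 del : R, 0 < del & forall s,
    `|s - t| < del -> `|h s - h t - d * (s - t)| <= e * `|s - t|.

Local Open Scope ereal_scope.

(* distance from a point to a set: inf of ||s - v|| over s in S (+oo if S empty) *)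
Definition dist n (v : 'cV[R]_n) (S : set 'cV[R]_n) : \bar R :=
  ereal_inf ((fun s => (enorm (s - v))%:E) @` S).

Definition reg_subdiff n (phi : 'cV[R]_n -> \bar R) (x : 'cV[R]_n) : set 'cV[R]_n :=
  [set v | phi x \is a fin_num /\
    forall e : R, (0 < e)%R -> exists2 d : R, (0 < d)%R & forall z,
      (enorm (z - x) < d)%R ->
      phi x + (dotv v (z - x) - e * enorm (z - x))%:E <= phi z].

Definition lim_subdiff n (phi : 'cV[R]_n -> \bar R) (x : 'cV[R]_n) : set 'cV[R]_n :=
  [set v | exists (xk vk : nat -> 'cV[R]_n) (pk : nat -> R) (a : R),
     phi x = a%:E /\ vcvg xk x /\ (forall k, phi (xk k) = (pk k)%:E) /\ rcvg pk a /\
     (forall k, reg_subdiff phi (xk k) (vk k)) /\ vcvg vk v].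

Definition prox n (g : 'cV[R]_n -> \bar R) (gam : R) (x : 'cV[R]_n) : set 'cV[R]_n :=
  [set w | forall u, g w + ((enorm (w - x)) ^+ 2 / (2 * gam))%:E
                      <= g u + ((enorm (u - x)) ^+ 2 / (2 * gam))%:E].

Definition prox_bdd_with n (g : 'cV[R]_n -> \bar R) (gam : R) : Prop :=
  (0 < gam)%R /\ exists M : R, forall x, M%:E <= g x + ((enorm x) ^+ 2 / (2 * gam))%:E.
Definition gamma_g n (g : 'cV[R]_n -> \bar R) : \bar R :=
  ereal_sup [set gam%:E | gam in prox_bdd_with g].

Variables (n m : nat).
Variables (f : 'cV[R]_n -> R) (gradf : 'cV[R]_n -> 'cV[R]_n)
          (g : 'cV[R]_n -> \bar R)
          (c : 'cV[R]_n -> 'cV[R]_m) (Jc : 'cV[R]_n -> 'M[R]_(m, n))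
          (b : R -> \bar R) (db : R -> R).

Definition q (x : 'cV[R]_n) : \bar R := (f x)%:E + g x.
(* q_mu = f + mu * sum_i b(c_i) + g ; equals +oo outside D since b = +oo on [0,oo) *)
Definition qmu (mu : R) (x : 'cV[R]_n) : \bar R :=
  (f x)%:E + (mu%:E * \sum_(i < m) b (c x i ord0)) + g x.
(* gradient of f_mu on D (chain rule: grad f + mu * sum_i b'(c_i) grad c_i) *)
Definition gradfmu (mu : R) (x : 'cV[R]_n) : 'cV[R]_n :=
  (gradf x + mu *: ((Jc x)^T *m \col_(i < m) db (c x i ord0)))%R.
Definition strictly_feasible (x : 'cV[R]_n) : Prop :=
  q x != +oo /\ forall i : 'I_m, (c x i ord0 < 0)%R.
Definition Tmap (mu gam : R) (z : 'cV[R]_n) : set 'cV[R]_n :=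
  prox g gam (z - gam *: gradfmu mu z)%R.

Definition fb_accept (alpha mu gam : R) (z w : 'cV[R]_n) : Prop :=
  (forall i : 'I_m, (c w i ord0 < 0)%R) /\
  qmu mu w <= qmu mu z - ((1 - alpha) / (2 * gam) * (enorm (w - z)) ^+ 2)%:E /\
  (enorm (gradfmu mu w - gradfmu mu z) <= alpha / gam * enorm (w - z))%R.

Definition fb_stop (mu gam eps : R) (z w : 'cV[R]_n) : Prop :=
  (enorm (gam^-1 *: (z - w) - gradfmu mu z + gradfmu mu w) <= eps)%R.

Definition gprev (gamma0 : R) (gam : nat -> R) (j : nat) : R :=
  if j is j'.+1 then gam j' else gamma0.

(* IPFB_returns z0 mu eps x : some (terminating) run of IP-FB(z0, mu, eps),
   with parameters gamma0, alpha, beta, returns x.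
   z j, zb j : the iterates z^j, \bar z^j; gam j : the accepted stepsize gamma_j,
   obtained from gamma_{j-1} (gamma0 for j = 0) after t j backtracking steps;
   every rejected trial stepsize produced a point failing the test. *)
Definition IPFB_returns (gamma0 alpha beta : R) (z0 : 'cV[R]_n) (mu eps : R)
    (x : 'cV[R]_n) : Prop :=
  exists (J : nat) (z zb : nat -> 'cV[R]_n) (gam : nat -> R) (t : nat -> nat),
    z 0%N = z0 /\
    (forall j, (j < J)%N -> z j.+1 = zb j) /\
    (forall j, (j <= J)%N ->
       gam j = (gprev gamma0 gam j * beta ^+ t j)%R /\
       (forall s, (s < t j)%N -> exists w,
          Tmap mu (gprev gamma0 gam j * beta ^+ s)%R (z j) w /\
          ~ fb_accept alpha mu (gprev gamma0 gam j * beta ^+ s)%R (z j) w) /\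
       Tmap mu (gam j) (z j) (zb j) /\
       fb_accept alpha mu (gam j) (z j) (zb j)) /\
    (forall j, (j < J)%N -> ~ fb_stop mu (gam j) eps (z j) (zb j)) /\
    fb_stop mu (gam J) eps (z J) (zb J) /\
    x = zb J.

Definition ip_stop (eps_p eps_d epsk : R) (x1 : 'cV[R]_n) (y1 : 'cV[R]_m) : Prop :=
  (epsk <= eps_d)%R /\ forall i : 'I_m, (Num.min (- c x1 i ord0) (y1 i ord0) <= eps_p)%R.

(* IP_run ... N : (x k, y k, mu k, eps k) are the data of the first N iterations
   k = 0..N-1 of Algorithm IP (it did not stop before iteration N-1); an infinite
   run is one for which IP_run holds for every N. *)
Definition IP_run (gamma0 alpha beta eps_p eps_d theta_eps theta_mu : R)
    (x : nat -> 'cV[R]_n) (y : nat -> 'cV[R]_m) (mu eps : nat -> R) (N : nat) : Prop :=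
  strictly_feasible (x 0%N) /\ (0 < eps 0%N)%R /\ (0 < mu 0%N)%R /\
  forall k, (k < N)%N ->
    IPFB_returns gamma0 alpha beta (x k) (mu k) (eps k) (x k.+1) /\
    (forall i : 'I_m, y k.+1 i ord0 = mu k * db (c (x k.+1) i ord0))%R /\
    ((k.+1 < N)%N ->
       ~ ip_stop eps_p eps_d (eps k) (x k.+1) (y k.+1) /\
       (0 < eps k.+1)%R /\ (eps k.+1 <= Num.max eps_d (theta_eps * eps k))%R /\
       (0 < mu k.+1)%R /\ (mu k.+1 <= theta_mu * mu k)%R).

End IP.

(* Main.v *)
Require Import Defs.
From HB Require Import structures.
From mathcomp Require Import all_boot all_order all_algebra.
From mathcomp Require Import all_classical all_reals all_analysis.
From mathcomp Require Import ring lra.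
Set Implicit Arguments. Unset Strict Implicit.
Import Order.TTheory GRing.Theory Num.Theory.
Import numFieldNormedType.Exports.



Section Vec.
Local Open Scope ring_scope.
Variable R : realType.
Variable n : nat.
Implicit Types u v w h : 'cV[R]_n.

Lemma dotv_ge0 u : 0 <= dotv u u.
Proof. by apply: sumr_ge0 => i _; rewrite -expr2 sqr_ge0. Qed.

Lemma enorm_ge0 u : 0 <= enorm u.
Proof. exact: sqrtr_ge0. Qed.

Lemma enorm_sq u : enorm u ^+ 2 = dotv u u.
Proof. by rewrite /enorm sqr_sqrtr // dotv_ge0. Qed.

Lemma dotvC u v : dotv u v = dotv v u.
Proof. by apply: eq_bigr => i _; rewrite mulrC. Qed.

Lemma dotvDl u v w : dotv (u + v) w = dotv u w + dotv v w.
Proof. by rewrite /dotv -big_split; apply: eq_bigr => i _; rewrite !mxE mulrDl. Qed.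

Lemma dotvDr u v w : dotv w (u + v) = dotv w u + dotv w v.
Proof. by rewrite dotvC dotvDl !(dotvC w). Qed.

Lemma dotvZl a u v : dotv (a *: u) v = a * dotv u v.
Proof. by rewrite /dotv mulr_sumr; apply: eq_bigr => i _; rewrite !mxE mulrA. Qed.

Lemma dotvZr a u v : dotv v (a *: u) = a * dotv v u.
Proof. by rewrite dotvC dotvZl dotvC. Qed.

Lemma dotvNl u v : dotv (- u) v = - dotv u v.
Proof. by rewrite -scaleN1r dotvZl mulN1r. Qed.

Lemma dotvNr u v : dotv v (- u) = - dotv v u.
Proof. by rewrite dotvC dotvNl dotvC. Qed.

Lemma dotvBl u v w : dotv (u - v) w = dotv u w - dotv v w.
Proof. by rewrite dotvDl dotvNl. Qed.

Lemma dotvBr u v w : dotv w (u - v) = dotv w u - dotv w v.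
Proof. by rewrite dotvDr dotvNr. Qed.

Lemma dotv0l u : dotv 0 u = 0.
Proof. by rewrite /dotv big1 // => i _; rewrite mxE mul0r. Qed.

Lemma coord_le u i : `|u i ord0| <= enorm u.
Proof.
rewrite /enorm -(sqrtr_sqr (u i ord0)) ler_sqrt ?dotv_ge0 //.
rewrite /dotv (bigD1 i) //= -expr2 lerDl.
by apply: sumr_ge0 => j _; rewrite -expr2 sqr_ge0.
Qed.

Lemma dotv_bound u h : `|dotv u h| <= (\sum_(j < n) `|u j ord0|) * enorm h.
Proof.
rewrite /dotv mulr_suml; apply: le_trans (ler_norm_sum _ _ _) _.
apply: ler_sum => j _; rewrite normrM; apply: ler_wpM2l => //; exact: coord_le.
Qed.

Lemma enorm0 : enorm (0 : 'cV[R]_n) = 0.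
Proof. by rewrite /enorm dotv0l sqrtr0. Qed.

End Vec.


Section Grad.
Local Open Scope ring_scope.
Variable R : realType.
Variable n : nat.
Implicit Types u v w h x G : 'cV[R]_n.

Lemma hg_ext (p q : 'cV[R]_n -> R) x G G' :
  (forall z, p z = q z) -> G = G' -> has_gradient p x G -> has_gradient q x G'.
Proof.
move=> pq <- H e e0; have [d d0 Hd] := H e e0; exists d => // z hz.
by rewrite -!pq; apply: Hd.
Qed.

Lemma hg_const (a : R) x : has_gradient (fun _ => a) x 0.
Proof.
move=> e e0; exists 1 => // z _; rewrite dotv0l !subrr normr0.
by apply: mulr_ge0; [exact: ltW|exact: enorm_ge0].
Qed.

Lemma hg_add p q x G1 G2 : has_gradient p x G1 -> has_gradient q x G2 ->
  has_gradient (fun z => p z + q z) x (G1 + G2).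
Proof.
move=> H1 H2 e e0.
have e2 : 0 < e / 2 by rewrite divr_gt0.
have [d1 d10 Hd1] := H1 _ e2; have [d2 d20 Hd2] := H2 _ e2.
exists (Num.min d1 d2); first by rewrite lt_min d10 d20.
move=> z; rewrite lt_min => /andP[z1 z2].
have A1 := Hd1 z z1; have A2 := Hd2 z z2.
rewrite dotvDl.
have -> : p z + q z - (p x + q x) - (dotv G1 (z - x) + dotv G2 (z - x)) =
  (p z - p x - dotv G1 (z - x)) + (q z - q x - dotv G2 (z - x)) by ring.
apply: le_trans (ler_normD _ _) _.
have -> : e * enorm (z - x) = e / 2 * enorm (z - x) + e / 2 * enorm (z - x).
  by field.
exact: lerD.
Qed.

Lemma hg_scale (a : R) p x G : has_gradient p x G ->
  has_gradient (fun z => a * p z) x (a *: G).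
Proof.
move=> H e e0.
have e2 : 0 < e / (`|a| + 1).
  by rewrite divr_gt0 // ltr_pwDr ?ltr01 ?normr_ge0.
have [d d0 Hd] := H _ e2; exists d => // z hz.
rewrite dotvZl -!mulrBr normrM.
apply: le_trans (ler_wpM2l (normr_ge0 _) (Hd z hz)) _.
rewrite mulrA ler_wpM2r ?enorm_ge0 //.
rewrite mulrCA ger_pMr // ler_pdivrMr ?mul1r ?lerDl //.
Qed.

Lemma hg_sum (I : Type) (s : seq I) (F : I -> 'cV[R]_n -> R) (GG : I -> 'cV[R]_n) x :
  (forall i, has_gradient (F i) x (GG i)) ->
  has_gradient (fun z => \sum_(i <- s) F i z) x (\sum_(i <- s) GG i).
Proof.
move=> H; elim: s => [|i s IH].
  by apply: (@hg_ext (fun _ => 0)) => [z||]; rewrite ?big_nil //; apply: hg_const.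
apply: (@hg_ext (fun z => F i z + \sum_(j <- s) F j z)) => [z||].
- by rewrite big_cons.
- by rewrite big_cons.
exact: hg_add.
Qed.

Lemma hg_lip p x G : has_gradient p x G ->
  exists2 d, 0 < d & forall z, enorm (z - x) < d ->
    `|p z - p x| <= (\sum_(j < n) `|G j ord0| + 1) * enorm (z - x).
Proof.
move=> H; have [d d0 Hd] := H 1 ltr01; exists d => // z hz.
have := Hd z hz; rewrite mul1r => A.
have B := dotv_bound G (z - x).
have -> : p z - p x = (p z - p x - dotv G (z - x)) + dotv G (z - x) by ring.
apply: le_trans (ler_normD _ _) _; rewrite mulrDl mul1r addrC.
exact: lerD.
Qed.

Lemma hg_chain (hh : R -> R) (dd : R) p x G :
  has_deriv1 hh (p x) dd -> has_gradient p x G ->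
  has_gradient (fun z => hh (p z)) x (dd *: G).
Proof.
move=> Hh Hp e e0.
have [d1 d10 Hd1] := hg_lip Hp.
set L := \sum_(j < n) `|G j ord0| + 1.
have L0 : 0 < L by rewrite /L ltr_pwDr ?ltr01 // sumr_ge0 // => j _.
have e2 : 0 < e / 2 / L by rewrite !divr_gt0.
have [del del0 Hdel] := Hh _ e2.
have e3 : 0 < e / 2 / (`|dd| + 1).
  by rewrite !divr_gt0 // ltr_pwDr ?ltr01 ?normr_ge0.
have [d2 d20 Hd2] := Hp _ e3.
exists (Num.min (Num.min d1 d2) (del / L)).
  by rewrite !lt_min d10 d20 divr_gt0.
move=> z; rewrite !lt_min => /andP[/andP[z1 z2] z3].
set N := enorm (z - x).
have N0 : 0 <= N by apply: enorm_ge0.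
have P1 : `|p z - p x| <= L * N by apply: Hd1.
have P2 : `|p z - p x| < del.
  apply: le_lt_trans P1 _; by rewrite mulrC -ltr_pdivlMr.
have A := Hdel _ P2.
have B := Hd2 z z2.
rewrite dotvZl.
have -> : hh (p z) - hh (p x) - dd * dotv G (z - x) =
   (hh (p z) - hh (p x) - dd * (p z - p x)) + dd * (p z - p x - dotv G (z - x)) by ring.
apply: le_trans (ler_normD _ _) _.
have -> : e * N = e / 2 / L * (L * N) + (`|dd| * (e / 2 / (`|dd| + 1) * N)
   + (e / 2 / (`|dd| + 1)) * N).
  have dd1 : `|dd| + 1 != 0 by rewrite gt_eqF // ltr_pwDr ?ltr01 ?normr_ge0.
  field; by rewrite dd1 gt_eqF.
apply: lerD.
  apply: le_trans A _; apply: ler_wpM2l; [exact: ltW|exact: P1].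
rewrite normrM.
have : 0 <= e / 2 / (`|dd| + 1) * N by rewrite mulr_ge0 // ltW.
have := ler_wpM2l (normr_ge0 dd) B; rewrite -/N => H1 H2; apply: le_trans H1 _; by rewrite lerDl.
Qed.

End Grad.


Section Jac.
Local Open Scope ring_scope.
Variable R : realType.
Variables n m : nat.

Lemma hg_comp (c : 'cV[R]_n -> 'cV[R]_m) x J (i : 'I_m) :
  has_jacobian c x J -> has_gradient (fun z => c z i ord0) x ((row i J)^T).
Proof.
move=> H e e0; have [d d0 Hd] := H e e0; exists d => // z hz.
have E : dotv (row i J)^T (z - x) = (J *m (z - x)) i ord0.
  by rewrite /dotv !mxE; apply: eq_bigr => j _; rewrite !mxE.
rewrite E; apply: le_trans (Hd z hz).
have := coord_le (c z - c x - J *m (z - x)) i; by rewrite !mxE.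
Qed.

Lemma sum_rows (J : 'M[R]_(m, n)) (w : 'I_m -> R) :
  J^T *m (\col_i w i) = \sum_(i < m) w i *: (row i J)^T.
Proof.
apply/matrixP => j k; rewrite !mxE summxE; apply: eq_bigr => i _.
by rewrite !mxE mulrC.
Qed.

End Jac.


Section Reg.
Local Open Scope ring_scope.
Variable R : realType.
Variables n : nat.

Lemma regsub (p : 'cV[R]_n -> R) (g : 'cV[R]_n -> \bar R) x u (gam : R) G :
  0 < gam -> (forall z, g z != -oo%E) -> has_gradient p x G ->
  g x \is a fin_num -> prox g gam u x ->
  reg_subdiff (fun z => ((p z)%:E + g z)%E) x (gam^-1 *: (u - x) + G).
Proof.
move=> g0 Hninf Hp Hfin Hprox; split; first by rewrite fin_numD Hfin.
move=> e e0.
have e2 : 0 < e / 2 by rewrite divr_gt0.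
have [d1 d10 Hd1] := Hp _ e2.
exists (Num.min d1 (gam * e)); first by rewrite lt_min d10 mulr_gt0.
move=> z; rewrite lt_min => /andP[z1 z2] /=.
have := Hninf z; case Gz: (g z) => [gz| |] // _; last first.
  by rewrite addey ?leey.
move: Hfin; case Gx: (g x) => [gx| |] // _.
have := Hprox z; rewrite Gx Gz -!EFinD lee_fin => Hpr.
rewrite lee_fin.
have Hg := Hd1 z z1.
set N := enorm (z - x) in z1 z2 Hg *.
have N0 : 0 <= N by exact: enorm_ge0.
have E1 : enorm (z - u) ^+ 2 = N ^+ 2 + 2 * dotv (z - x) (x - u) + enorm (x - u) ^+ 2.
  rewrite /N !enorm_sq.
  have -> : z - u = (z - x) + (x - u) by rewrite addrA subrK.
  move: (z - x) (x - u) => a1 b1; rewrite !dotvDl !dotvDr (dotvC b1 a1); ring.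
have E2 : dotv (gam^-1 *: (u - x) + G) (z - x) =
   gam^-1 * (- dotv (z - x) (x - u)) + dotv G (z - x).
  have -> : u - x = -(x - u) by rewrite opprB.
  by rewrite dotvDl dotvZl dotvNl (dotvC (x - u)).
rewrite E2; rewrite E1 in Hpr.
set A := dotv (z - x) (x - u) in Hpr *.
set P := enorm (x - u) ^+ 2 in Hpr *.
have HQ : N ^+ 2 / (2 * gam) <= e / 2 * N.
  rewrite ler_pdivrMr ?mulr_gt0 // expr2.
  have : N * N <= (gam * e) * N by rewrite ler_wpM2r // ltW.
  by move=> H; apply: le_trans H _; rewrite le_eqVlt; apply/orP; left; apply/eqP; field.
have Hsplit : (N ^+ 2 + 2 * A + P) / (2 * gam) =
   N ^+ 2 / (2 * gam) + gam^-1 * A + P / (2 * gam).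
  by field; rewrite gt_eqF.
rewrite Hsplit in Hpr.
move: Hpr HQ Hg; set a := N ^+ 2 / (2 * gam); set bb := gam^-1 * A.
have -> : gam^-1 * - A = - bb by rewrite /bb mulrN.
set P2 := P / (2 * gam); set DG := dotv G (z - x).
move=> Hpr HQ Hg.
rewrite ler_norml in Hg; case/andP: Hg => Hg1 Hg2.
lra.
Qed.

End Reg.


Section Misc.
Local Open Scope ring_scope.
Variable R : realType.
Variables n : nat.

Lemma dist_le (v s : 'cV[R]_n) (S : set 'cV[R]_n) :
  S s -> (dist v S <= (enorm (s - v))%:E)%E.
Proof. by move=> Ss; apply: ereal_inf_lbound; exists s. Qed.

Lemma reg_lim (phi : 'cV[R]_n -> \bar R) x v :
  reg_subdiff phi x v -> lim_subdiff phi x v.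
Proof.
move=> H; have [Hf _] := H.
exists (fun _ => x), (fun _ => v), (fun _ => fine (phi x)), (fine (phi x)).
split; first by rewrite fineK.
split; first by move=> e e0; exists 0%N => k _; rewrite subrr enorm0.
split; first by move=> k; rewrite fineK.
split; first by move=> e e0; exists 0%N => k _; rewrite subrr normr0.
split; first by [].
by move=> e e0; exists 0%N => k _; rewrite subrr enorm0.
Qed.

Lemma reg_mono (phi psi : 'cV[R]_n -> \bar R) x v :
  (forall z, (psi z <= phi z)%E) -> phi x = psi x ->
  reg_subdiff psi x v -> reg_subdiff phi x v.
Proof.
move=> Hle Heq [Hf H]; split; first by rewrite Heq.
move=> e e0; have [d d0 Hd] := H e e0; exists d => // z hz.
rewrite Heq; apply: le_trans (Hd z hz) (Hle z).
Qed.

Lemma sube_le (a : \bar R) (r : R) : 0 <= r -> (a - r%:E <= a)%E.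
Proof.
move=> r0; case: a => [a'| |] //=; by rewrite lee_fin lerBlDr lerDl.
Qed.

End Misc.


Section Prob.
Local Open Scope ring_scope.
Variables (R : realType) (n m : nat).
Variables (f : 'cV[R]_n -> R) (gradf : 'cV[R]_n -> 'cV[R]_n)
          (g : 'cV[R]_n -> \bar R)
          (c : 'cV[R]_n -> 'cV[R]_m) (Jc : 'cV[R]_n -> 'M[R]_(m, n))
          (b : R -> \bar R) (db : R -> R).
Hypothesis Hg_ninf : forall x, g x != -oo%E.
Hypothesis Hb_ge0 : forall t, (0 <= b t)%E.
Hypothesis Hb_dom : forall t, b t != +oo%E <-> t < 0.

Lemma b_fin t : t < 0 -> b t = (fine (b t))%:E.
Proof.
move=> t0; rewrite fineK // fin_numE; apply/andP; split; last exact/Hb_dom.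
by rewrite gt_eqF // (lt_le_trans _ (Hb_ge0 t)) // ltNye.
Qed.

Lemma b_inf t : ~ (t < 0) -> b t = +oo%E.
Proof. by move=> Ht; apply/eqP; apply: contra_notT Ht => H; apply/Hb_dom. Qed.

Definition phimu mu z := f z + mu * \sum_(i < m) fine (b (c z i ord0)).

Lemma qmu_feas mu z : (forall i, c z i ord0 < 0) ->
  qmu f g c b mu z = ((phimu mu z)%:E + g z)%E.
Proof.
move=> Hc; rewrite /qmu /phimu.
rewrite (eq_bigr (fun i => (fine (b (c z i ord0)))%:E)); last by move=> i _; apply: b_fin.
by rewrite sumEFin -EFinM -EFinD.
Qed.

Lemma sumb_ge0 z : (0 <= \sum_(i < m) b (c z i ord0))%E.
Proof. by apply: sume_ge0 => i _. Qed.

Lemma qmu_infeas mu z : 0 < mu -> ~ (forall i, c z i ord0 < 0) ->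
  qmu f g c b mu z = +oo%E.
Proof.
move=> mu0 /existsNP[i Hi]; rewrite /qmu.
rewrite (bigD1 i) //= b_inf // addye; last first.
  by rewrite gt_eqF // (lt_le_trans _ (sume_ge0 _ _)) ?ltNye.
rewrite mulry gtr0_sg // mul1e addey // addye //.
Qed.

Lemma psi_le mu z : 0 < mu -> ((phimu mu z)%:E + g z <= qmu f g c b mu z)%E.
Proof.
move=> mu0; case: (pselect (forall i, c z i ord0 < 0)) => H.
  by rewrite qmu_feas.
by rewrite qmu_infeas // leey.
Qed.

Lemma qmu_g_inf mu z : 0 <= mu -> g z = +oo%E -> qmu f g c b mu z = +oo%E.
Proof.
move=> mu0 gz; rewrite /qmu gz addey //.
rewrite gt_eqF // (lt_le_trans (ltNye (f z)%:E)) // leeDl //.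
by apply: mule_ge0; [rewrite lee_fin|apply: sumb_ge0].
Qed.

Lemma sf_qmu_fin mu z : strictly_feasible f g c z -> qmu f g c b mu z != +oo%E.
Proof.
case=> Hq Hc; rewrite qmu_feas //.
have : g z != +oo%E by apply: contraNneq Hq; rewrite /q => ->; rewrite addey.
move: (Hg_ninf z); case: (g z) => //.
Qed.

Lemma q_le_qmu mu z : 0 <= mu -> (q f g z <= qmu f g c b mu z)%E.
Proof.
move=> mu0; rewrite /q /qmu; apply: leeD2r; apply: leeDl.
by apply: mule_ge0; [rewrite lee_fin|apply: sumb_ge0].
Qed.

Lemma qmu_anti mu1 mu2 z : 0 <= mu1 -> mu1 <= mu2 ->
  (qmu f g c b mu1 z <= qmu f g c b mu2 z)%E.
Proof.
move=> m1 m12; rewrite /qmu; apply: leeD2r; apply: leeD2l.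
by apply: lee_wpmul2r; [apply: sumb_ge0|rewrite lee_fin].
Qed.


Hypothesis Hf : forall x, has_gradient f x (gradf x).
Hypothesis Hc : forall x, has_jacobian c x (Jc x).
Hypothesis Hb_d1 : forall t : R, t < 0 -> has_deriv1 (fine \o b) t (db t).

Lemma phimu_grad mu x : (forall i, c x i ord0 < 0) ->
  has_gradient (phimu mu) x (gradfmu gradf c Jc db mu x).
Proof.
move=> Hcx; rewrite /gradfmu sum_rows.
apply: hg_add; first exact: Hf.
apply: hg_scale.
have H := @hg_sum R n 'I_m (index_enum 'I_m) (fun i z => fine (b (c z i ord0)))
  (fun i => db (c x i ord0) *: (row i (Jc x))^T) x.
apply: (hg_ext _ _ (H _)) => //.
move=> i; apply: (@hg_chain R n (fine \o b)); first exact: Hb_d1.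
exact: hg_comp.
Qed.


Lemma ipfb_main gamma0 alpha beta z0 mu eps x1 :
  0 < gamma0 -> 0 < beta -> alpha < 1 ->
  IPFB_returns f gradf g c Jc b db gamma0 alpha beta z0 mu eps x1 ->
  [/\ (qmu f g c b mu x1 <= qmu f g c b mu z0)%E, (forall i, c x1 i ord0 < 0) &
  exists z gam, [/\ 0 < gam, Tmap gradf g c Jc db mu gam z x1 &
     fb_stop gradf c Jc db mu gam eps z x1]].
Proof.
move=> g0 b0 a1 [J [z [zb [gam [t [Hz0 [Hzs [Hj [Hns [Hstop Hx]]]]]]]]]].
have gpos : forall j, (j <= J)%N -> 0 < gam j.
  elim=> [|j IH] hj; have [-> _] := Hj _ hj; apply: mulr_gt0; rewrite ?exprn_gt0 //=.
  apply: IH; exact: ltnW.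
have desc : forall j, (j <= J)%N ->
    (qmu f g c b mu (zb j) <= qmu f g c b mu (z j))%E.
  move=> j hj; have [_ [_ [_ [_ [Hb _]]]]] := Hj _ hj.
  apply: le_trans Hb _; apply: sube_le; apply: mulr_ge0; last first.
    by apply: exprn_ge0; apply: enorm_ge0.
  apply: divr_ge0; first by rewrite subr_ge0 ltW.
  by apply: mulr_ge0 => //; apply: ltW; apply: gpos.
have mono : forall j, (j <= J)%N ->
    (qmu f g c b mu (z j) <= qmu f g c b mu z0)%E.
  elim=> [|j IH] hj; first by rewrite Hz0.
  by rewrite Hzs //; apply: le_trans (desc j (ltnW hj)) (IH (ltnW hj)).
subst x1; have [_ [_ [HT [Hci _]]]] := Hj J (leqnn J).
split => //; first exact: le_trans (desc J (leqnn J)) (mono J (leqnn J)).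
exists (z J), (gam J); split => //; exact: gpos.
Qed.

End Prob.

Unset Implicit Arguments. Set Strict Implicit.
Local Open Scope ring_scope.
Local Open Scope classical_set_scope.
Local Open Scope ereal_scope.

Theorem lemma4p1 (R : realType) (n m : nat)
  (f : 'cV[R]_n -> R) (gradf : 'cV[R]_n -> 'cV[R]_n)
  (g : 'cV[R]_n -> \bar R)
  (c : 'cV[R]_n -> 'cV[R]_m) (Jc : 'cV[R]_n -> 'M[R]_(m, n))
  (b : R -> \bar R) (db d2b : R -> R)
  (* f has a locally Lipschitz gradient *)
  (Hf : forall x, has_gradient f x (gradf x))
  (Hgradf : loc_lipschitz_vec gradf)
  (* g proper, lsc, prox-bounded, continuous relative to dom g *)
  (Hg_ninf : forall x, g x != -oo)
  (Hg_proper : exists x, g x != +oo)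
  (Hg_lsc : lower_semicontinuous g)
  (Hg_pb : exists gam : R, prox_bdd_with g gam)
  (Hg_cont : forall (xk : nat -> 'cV[R]_n) (x : 'cV[R]_n),
      (forall k, g (xk k) != +oo) -> vcvg xk x -> (g \o xk) @ \oo --> g x)
  (* c has a locally Lipschitz Jacobian *)
  (Hc : forall x, has_jacobian c x (Jc x))
  (HJc : loc_lipschitz_mx Jc)
  (* q bounded below on the feasible set; F nonempty *)
  (Hinf : ereal_inf [set q f g x | x in [set x | forall i : 'I_m, (c x i ord0 <= 0)%R]]
            \is a fin_num)
  (HF : exists x, strictly_feasible f g c x)
  (* barrier: dom b = (-oo,0), b >= 0, C^2 there with b' > 0, b -> oo at 0^- *)
  (Hb_ge0 : forall t, 0 <= b t)
  (Hb_dom : forall t, b t != +oo <-> (t < 0)%R)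
  (Hb_d1 : forall t : R, (t < 0)%R -> has_deriv1 (fine \o b) t (db t))
  (Hb_d2 : forall t : R, (t < 0)%R -> has_deriv1 db t (d2b t))
  (Hb_d2cont : forall t : R, (t < 0)%R -> {for t, continuous d2b})
  (Hb_pos : forall t : R, (t < 0)%R -> (0 < db t)%R)
  (Hb_blow : forall M : R, exists2 d : R, (0 < d)%R &
      forall t : R, (- d < t)%R -> (t < 0)%R -> M%:E < b t)
  (* parameters *)
  (gamma0 alpha beta eps_p eps_d theta_eps theta_mu : R)
  (Hgamma0 : (0 < gamma0)%R) (Hgamma0g : gamma0%:E < gamma_g g)
  (Halpha : (0 < alpha < 1)%R) (Hbeta : (0 < beta < 1)%R)
  (Heps_p : (0 < eps_p)%R) (Heps_d : (0 < eps_d)%R)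
  (Htheta_eps : (0 < theta_eps < 1)%R) (Htheta_mu : (0 < theta_mu < 1)%R)
  (* a run of Algorithm IP with N iterations *)
  (x : nat -> 'cV[R]_n) (y : nat -> 'cV[R]_m) (mu eps : nat -> R) (N : nat)
  (Hrun : IP_run f gradf g c Jc b db gamma0 alpha beta eps_p eps_d theta_eps theta_mu
            x y mu eps N) :
  forall k, (k < N)%N ->
    (* (1) *)
    (q f g (x k.+1) <= qmu f g c b (mu k) (x k.+1) /\
     qmu f g c b (mu k) (x k.+1) <= qmu f g c b (mu k) (x k) /\
     ((0 < k)%N -> qmu f g c b (mu k) (x k) <= qmu f g c b (mu k.-1) (x k))) /\
    (* (2) *)
    (dist 0 (reg_subdiff (qmu f g c b (mu k)) (x k.+1)) <= (eps k)%:E /\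
     strictly_feasible f g c (x k.+1)) /\
    (* (3) *)
    (forall i : 'I_m, (0 <= y k.+1 i ord0)%R) /\
    (* (4) *)
    dist (- ((Jc (x k.+1))^T *m y k.+1))%R (lim_subdiff (q f g) (x k.+1)) <= (eps k)%:E.
Proof.
have [Hsf0 [Heps0 [Hmu0 Hit]]] := Hrun.
have [g0' g1'] := andP Hbeta; have [a0 a1] := andP Halpha.
have [t0 t1] := andP Htheta_mu.
have mupos : forall j, (j < N)%N -> (0 < mu j)%R.
  case=> [|j] hj //; by have [_ [_ /(_ hj) [_ [_ [_ [H _]]]]]] := Hit j (ltnW hj).
have sf : forall j, (j <= N)%N -> strictly_feasible f g c (x j).
  elim=> [|j IH] hj //.
  have hjN : (j < N)%N by [].
  have [Hip _] := Hit j hjN.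
  have [Hdesc Hcx _] := ipfb_main Hgamma0 g0' a1 Hip.
  split => //; rewrite -ltey.
  apply: le_lt_trans (q_le_qmu f g c Hb_ge0 _ (ltW (mupos j hjN))) _.
  apply: le_lt_trans Hdesc _; rewrite ltey.
  exact: (sf_qmu_fin Hg_ninf Hb_ge0 Hb_dom (mu j) (IH (ltnW hj))).
move=> k hk.
have [Hip [Hy _]] := Hit k hk.
have [Hdesc Hcx [z [gam [gam0 HT Hst]]]] := ipfb_main Hgamma0 g0' a1 Hip.
have mk := mupos k hk.
have [Hq1 _] := sf k.+1 hk.
have gfin : g (x k.+1) \is a fin_num.
  rewrite fin_numE Hg_ninf /=; apply: contraNneq Hq1; rewrite /q => ->.
  by rewrite addey.
set x1 := x k.+1 in Hdesc Hcx HT Hst Hq1 gfin Hy *.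
set Gz := gradfmu gradf c Jc db (mu k) z.
set Gx := gradfmu gradf c Jc db (mu k) x1.
have Ev : (gam^-1 *: ((z - gam *: Gz) - x1) + Gx =
          gam^-1 *: (z - x1) - Gz + Gx)%R.
  congr (_ + _)%R; move: Gz => G.
  rewrite !scalerDr !scalerN scalerA mulVf ?gt_eqF // scale1r.
  by rewrite addrAC.
have Hst' : (enorm (gam^-1 *: ((z - gam *: Gz) - x1) + Gx) <= eps k)%R.
  by rewrite Ev.
split.
  split; first exact: (q_le_qmu f g c Hb_ge0 _ (ltW mk)).
  split; first exact: Hdesc.
  case: k hk {Hip Hy Hdesc Hcx HT Hst Hq1 gfin x1 Gz Gx Ev Hst' mk} => [|k] hk // _.
  apply: (qmu_anti f g c Hb_ge0); first exact: ltW (mupos _ hk).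
  have [_ [_ /(_ hk) [_ [_ [_ [_ H]]]]]] := Hit k (ltnW hk).
  apply: le_trans H _; apply: ler_piMl; last exact: ltW.
  by apply: ltW; apply: mupos; exact: ltnW.
split.
  split; last exact: sf k.+1 hk.
  have Hreg := regsub gam0 Hg_ninf (phimu_grad Hf Hc Hb_d1 (mu k) Hcx) gfin HT.
  have Hreg2 := reg_mono (fun z => psi_le f c Hg_ninf Hb_ge0 Hb_dom z mk) (qmu_feas f g Hb_ge0 Hb_dom (mu k) Hcx) Hreg.
  apply: le_trans (dist_le _ Hreg2) _; rewrite subr0 lee_fin //.
split.
  move=> i; rewrite Hy; apply: mulr_ge0; first exact: ltW.
  exact: ltW (Hb_pos _ (Hcx i)).
have Hreg' := regsub gam0 Hg_ninf (Hf x1) gfin HT.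
have Hl : lim_subdiff (q f g) x1 (gam^-1 *: (z - gam *: Gz - x1) + gradf x1)%R.
  exact: reg_lim Hreg'.
apply: le_trans (dist_le _ Hl) _; rewrite lee_fin.
have Ey : y k.+1 = (mu k *: \col_i db (c x1 i ord0))%R.
  by apply/matrixP => i j; rewrite (ord1 j) !mxE Hy.
suff -> : (gam^-1 *: (z - gam *: Gz - x1) + gradf x1 - - ((Jc x1)^T *m y k.+1) =
   gam^-1 *: (z - gam *: Gz - x1) + Gx)%R by [].
by rewrite opprK Ey -scalemxAr /Gx /gradfmu addrA.
Qed.
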